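(* Let $\mathcal{H}$ be a real Hilbert space, let $A_1, A_2:\mathcal{H}\to 2^{\mathcal{H}}$ be maximally monotone, let $B:\mathcal{H}\to\mathcal{H}$ be monotone and $L$-Lipschitz continuous ($L>0$), let $C:\mathcal{H}\to\mathcal{H}$ be $\beta$-cocoercive ($\beta>0$), and let $\gamma>0$. Let $z_0, y_0, y_{-1}\in\mathcal{H}$ and define sequences $\{x_n\},\{y_n\},\{z_n\}$ for $n\ge 0$ by $$x_{n+1}=J_{\gamma A_1}z_n,\qquad y_{n+1}=J_{\gamma A_2}\big(2x_{n+1}-z_n-2\gamma By_n+\gamma By_{n-1}-\gamma Cy_n\big),\qquad z_{n+1}=z_n+y_{n+1}-x_{n+1}.$$ Suppose that there exist $x,z\in\mathcal{H}$ such that $z-x\in\gamma A_1x$ and $x-z\in\gamma(A_2+B+C)x$. Then for all $n\in\mathbb{N}$, $$\|z_{n+1}-z\|^2+2\gamma\langle By_{n+1}-By_n,x-y_{n+1}\rangle+\|z_{n+1}-z_n\|^2 \le \|z_n-z\|^2+2\gamma\langle By_n-By_{n-1},x-y_n\rangle+2\gamma\langle By_n-By_{n-1},y_n-y_{n+1}\rangle+2\gamma\langle Cy_n-Cx,x-y_{n+1}\rangle.$$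
   Context: For a maximally monotone operator $A$ and $\gamma>0$, $J_{\gamma A}=(\mathrm{Id}+\gamma A)^{-1}$ is the resolvent (single-valued, defined on all of $\mathcal{H}$). An operator $C$ is $\beta$-cocoercive if $\langle x-y,Cx-Cy\rangle\ge\beta\|Cx-Cy\|^2$ for all $x,y$. *)

(* Defs.v *)
From mathcomp Require Import all_boot all_order all_algebra.
From mathcomp Require Import classical_sets reals.
Set Implicit Arguments. Unset Strict Implicit. Unset Printing Implicit Defensive.
Import Order.TTheory GRing.Theory Num.Theory.
Local Open Scope ring_scope.
Local Open Scope classical_set_scope.

Section Hilbert.
Variables (R : realType) (V : lmodType R).

Definition ip_norm (ip : V -> V -> R) (v : V) : R := Num.sqrt (ip v v).

Definition is_real_inner_product (ip : V -> V -> R) : Prop :=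
  [/\ (forall u v, ip u v = ip v u),
      (forall (a : R) u v w, ip (a *: u + v) w = a * ip u w + ip v w),
      (forall v, 0 <= ip v v) &
      (forall v, ip v v = 0 -> v = 0)].

Definition ip_complete (ip : V -> V -> R) : Prop :=
  forall u : nat -> V,
    (forall e : R, 0 < e -> exists N : nat, forall m n : nat,
        (N <= m)%N -> (N <= n)%N -> ip_norm ip (u m - u n) < e) ->
    exists l : V, forall e : R, 0 < e -> exists N : nat, forall n : nat,
        (N <= n)%N -> ip_norm ip (u n - l) < e.

Definition real_hilbert (ip : V -> V -> R) : Prop :=
  is_real_inner_product ip /\ ip_complete ip.

Definition monotone_op (ip : V -> V -> R) (A : V -> set V) : Prop :=
  forall x y u v, A x u -> A y v -> 0 <= ip (x - y) (u - v).

Definition maximally_monotone (ip : V -> V -> R) (A : V -> set V) : Prop :=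
  monotone_op ip A /\
  forall A' : V -> set V, monotone_op ip A' ->
    (forall x u, A x u -> A' x u) -> forall x u, A' x u -> A x u.

Definition monotone_fun (ip : V -> V -> R) (B : V -> V) : Prop :=
  forall x y, 0 <= ip (x - y) (B x - B y).

Definition lipschitz_fun (ip : V -> V -> R) (L : R) (B : V -> V) : Prop :=
  forall x y, ip_norm ip (B x - B y) <= L * ip_norm ip (x - y).

Definition cocoercive (ip : V -> V -> R) (beta : R) (C : V -> V) : Prop :=
  forall x y, beta * (ip_norm ip (C x - C y)) ^+ 2 <= ip (x - y) (C x - C y).

Definition op_scale (g : R) (A : V -> set V) : V -> set V :=
  fun x => [set g *: a | a in A x].

Definition op_add3 (A : V -> set V) (B C : V -> V) : V -> set V :=
  fun x => [set a + B x + C x | a in A x].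

(* p = J_{gamma A} z, i.e. p = (Id + gamma A)^{-1} z, i.e. z - p \in gamma A p *)
Definition resolvent_rel (g : R) (A : V -> set V) (z p : V) : Prop :=
  op_scale g A p (z - p).

(* y_{n-1} given y_{-1} = ym1 and y : nat -> V with y n = y_n *)
Definition yprev (ym1 : V) (y : nat -> V) (n : nat) : V :=
  match n with 0 => ym1 | k.+1 => y k end.

End Hilbert.

(* Main.v *)
Require Import Defs.
From mathcomp Require Import all_boot all_order all_algebra.
From mathcomp Require Import classical_sets reals.
From mathcomp Require Import lra.
Import Order.TTheory GRing.Theory Num.Theory.
Local Open Scope ring_scope.

Theorem lemma3p1 (R : realType) (V : lmodType R) (ip : V -> V -> R)
  (A1 A2 : V -> set V) (B C : V -> V) (L beta gamma : R)
  (xs ys zs : nat -> V) (ym1 x z : V) :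
  real_hilbert ip ->
  maximally_monotone ip A1 -> maximally_monotone ip A2 ->
  monotone_fun ip B -> 0 < L -> lipschitz_fun ip L B ->
  0 < beta -> cocoercive ip beta C ->
  0 < gamma ->
  (forall n : nat, resolvent_rel gamma A1 (zs n) (xs n.+1)) ->
  (forall n : nat, resolvent_rel gamma A2
      (2 *: xs n.+1 - zs n - (2 * gamma) *: B (ys n)
         + gamma *: B (yprev ym1 ys n) - gamma *: C (ys n))
      (ys n.+1)) ->
  (forall n : nat, zs n.+1 = zs n + ys n.+1 - xs n.+1) ->
  op_scale gamma A1 x (z - x) ->
  op_scale gamma (op_add3 A2 B C) x (x - z) ->
  forall n : nat,
    (ip_norm ip (zs n.+1 - z)) ^+ 2
      + 2 * gamma * ip (B (ys n.+1) - B (ys n)) (x - ys n.+1)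
      + (ip_norm ip (zs n.+1 - zs n)) ^+ 2
    <= (ip_norm ip (zs n - z)) ^+ 2
      + 2 * gamma * ip (B (ys n) - B (yprev ym1 ys n)) (x - ys n)
      + 2 * gamma * ip (B (ys n) - B (yprev ym1 ys n)) (ys n - ys n.+1)
      + 2 * gamma * ip (C (ys n) - C x) (x - ys n.+1).
Proof.
move=> [[ipC ipL ipP ipD] _] [mon1 _] [mon2 _] monB _ _ _ _ gpos HA1 HA2 Hz HX1 HX2 n.
have ip0l : forall w, ip 0 w = 0.
  move=> w; have := ipL 1 0 0 w; rewrite scale1r !addr0 mul1r => h.
  by have := subrr (ip 0 w); rewrite {1}h addrK.
have ipDl : forall u v w, ip (u + v) w = ip u w + ip v w.
  by move=> u v w; rewrite -{1}(scale1r u) ipL mul1r.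
have ipZl : forall (a : R) u w, ip (a *: u) w = a * ip u w.
  by move=> a u w; rewrite -(addr0 (a *: u)) ipL ip0l addr0.
have ipNl : forall u w, ip (- u) w = - ip u w.
  by move=> u w; rewrite -scaleN1r ipZl mulN1r.
have ipDr : forall u v w, ip w (u + v) = ip w u + ip w v.
  by move=> u v w; rewrite ipC ipDl (ipC u) (ipC v).
have ipZr : forall (a : R) u w, ip w (a *: u) = a * ip w u.
  by move=> a u w; rewrite ipC ipZl ipC.
have ipNr : forall u w, ip w (- u) = - ip w u.
  by move=> u w; rewrite ipC ipNl ipC.
have nsq : forall v, ip_norm ip v ^+ 2 = ip v v.
  by move=> v; rewrite /ip_norm sqr_sqrtr.
case: (HA1 n) => a1 Ha1 Ea1.
case: (HA2 n) => a2 Ha2 Ea2.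
case: HX1 => b1 Hb1 Eb1.
case: HX2 => s [b2 Hb2 <-] Es.
have e1 := congr1 (ip (xs n.+1 - x)) Ea1.
have e1' := congr1 (ip (xs n.+1 - x)) Eb1.
have e2 := congr1 (ip (ys n.+1 - x)) Ea2.
have e3 := congr1 (ip (ys n.+1 - x)) Es.
have m1 := mulr_ge0 (ltW gpos) (mon1 _ _ _ _ Ha1 Hb1).
have m2 := mulr_ge0 (ltW gpos) (mon2 _ _ _ _ Ha2 Hb2).
have m3 := mulr_ge0 (ltW gpos) (monB (ys n.+1) x).
rewrite !nsq Hz.
rewrite !(ipDl, ipNl, ipZl, ipDr, ipNr, ipZr) in e1 e1' e2 e3 m1 m2 m3 *.
rewrite ?(ipC z (zs n)) ?(ipC (xs n.+1) (zs n)) ?(ipC (ys n.+1) (zs n)) ?(ipC x (zs n)) ?(ipC (ys n) (zs n)) ?(ipC (B (ys n.+1)) (zs n)) ?(ipC (B (ys n)) (zs n)) ?(ipC (B (yprev ym1 ys n)) (zs n)) ?(ipC (B x) (zs n)) ?(ipC (C (ys n)) (zs n)) ?(ipC (C x) (zs n)) ?(ipC a1 (zs n)) ?(ipC b1 (zs n)) ?(ipC a2 (zs n)) ?(ipC b2 (zs n)) ?(ipC (xs n.+1) z) ?(ipC (ys n.+1) z) ?(ipC x z) ?(ipC (ys n) z) ?(ipC (B (ys n.+1)) z) ?(ipC (B (ys n)) z) ?(ipC (B (yprev ym1 ys n)) z) ?(ipC (B x) z) ?(ipC (C (ys n)) z) ?(ipC (C x) z) ?(ipC a1 z) ?(ipC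 b1 z) ?(ipC a2 z) ?(ipC b2 z) ?(ipC (ys n.+1) (xs n.+1)) ?(ipC x (xs n.+1)) ?(ipC (ys n) (xs n.+1)) ?(ipC (B (ys n.+1)) (xs n.+1)) ?(ipC (B (ys n)) (xs n.+1)) ?(ipC (B (yprev ym1 ys n)) (xs n.+1)) ?(ipC (B x) (xs n.+1)) ?(ipC (C (ys n)) (xs n.+1)) ?(ipC (C x) (xs n.+1)) ?(ipC a1 (xs n.+1)) ?(ipC b1 (xs n.+1)) ?(ipC a2 (xs n.+1)) ?(ipC b2 (xs n.+1)) ?(ipC x (ys n.+1)) ?(ipC (ys n) (ys n.+1)) ?(ipC (B (ys n.+1)) (ys n.+1)) ?(ipC (B (ys n)) (ys n.+1)) ?(ipC (B (yprev ym1 ys n)) (ys n.+1)) ?(ipC (B x) (ys n.+1)) ?(ipC (C (ys n)) (ys n.+1)) ?(ipC (C x) (ys n.+1)) ?(ipC a1 (ys n.+1)) ?(ipC b1 (ys n.+1)) ?(ipC a2 (ys n.+1)) ?(ipC b2 (ys n.+1)) ?(ipC (ys n) x) ?(ipC (B (ys n.+1)) x) ?(ipC (B (ys n)) x) ?(ipC (B (yprev ym1 ys n)) x) ?(ipC (B x) x) ?(ipC (C (ys n)) x) ?(ipC (C x) x) ?(ipC a1 x) ?(ipC b1 x) ?(ipC a2 x) ?(ipC b2 x) ?(ipC (B (ys n.+1)) (ys n)) ?(ipC (B (ys n)) (ys n)) ?(ipC (B (yprev ym1 ys n)) (ys n)) ?(ipC (B x) (ys n)) ?(ipC (C (ys n))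 (ys n)) ?(ipC (C x) (ys n)) ?(ipC a1 (ys n)) ?(ipC b1 (ys n)) ?(ipC a2 (ys n)) ?(ipC b2 (ys n)) ?(ipC (B (ys n)) (B (ys n.+1))) ?(ipC (B (yprev ym1 ys n)) (B (ys n.+1))) ?(ipC (B x) (B (ys n.+1))) ?(ipC (C (ys n)) (B (ys n.+1))) ?(ipC (C x) (B (ys n.+1))) ?(ipC a1 (B (ys n.+1))) ?(ipC b1 (B (ys n.+1))) ?(ipC a2 (B (ys n.+1))) ?(ipC b2 (B (ys n.+1))) ?(ipC (B (yprev ym1 ys n)) (B (ys n))) ?(ipC (B x) (B (ys n))) ?(ipC (C (ys n)) (B (ys n))) ?(ipC (C x) (B (ys n))) ?(ipC a1 (B (ys n))) ?(ipC b1 (B (ys n))) ?(ipC a2 (B (ys n))) ?(ipC b2 (B (ys n))) ?(ipC (B x) (B (yprev ym1 ys n))) ?(ipC (C (ys n)) (B (yprev ym1 ys n))) ?(ipC (C x) (B (yprev ym1 ys n))) ?(ipC a1 (B (yprev ym1 ys n))) ?(ipC b1 (B (yprev ym1 ys n))) ?(ipC a2 (B (yprev ym1 ys n))) ?(ipC b2 (B (yprev ym1 ys n))) ?(ipC (C (ys n)) (B x)) ?(ipC (C x) (B x)) ?(ipC a1 (B x)) ?(ipC b1 (B x)) ?(ipC a2 (B x)) ?(ipC b2 (B x)) ?(ipC (C x) (C (ys n))) ?(ipC a1 (C (ys n))) ?(ipC b1 (C (ys n))) ?(ipC a2 (C (ys n))) ?(ipC b2 (C (ys n))) ?(ipC a1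 (C x)) ?(ipC b1 (C x)) ?(ipC a2 (C x)) ?(ipC b2 (C x)) ?(ipC b1 a1) ?(ipC a2 a1) ?(ipC b2 a1) ?(ipC a2 b1) ?(ipC b2 b1) ?(ipC b2 a2) in e1 e1' e2 e3 m1 m2 m3 *.
clear -e1 e1' e2 e3 m1 m2 m3 gpos. lra.
Qed.
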